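(* $\mathfrak{ss}_{cc}\leq\mathfrak d$ and $\mathfrak b\leq\mathfrak{ss}_{cc}^\perp$.
   Context: Let $\mathfrak S$ be the set of all sequences $\mathbf a=\langle a_i:i\in\omega\rangle$ of rational numbers with $a_i\to 0$. Let $[\omega]^\omega_\omega$ denote the set of infinite coinfinite subsets of $\omega$. For infinite $X\subseteq\omega$ with increasing enumeration $\langle i_n\rangle$ write $\sum_X\mathbf a$ for $\sum_n a_{i_n}$. A series is convergent if its partial sums converge to a real number; it is conditional if $\sum_{\{i:a_i>0\}}\mathbf a=\infty$ and $\sum_{\{i:a_i<0\}}\mathbf a=-\infty$; conditionally convergent if both. Let $\mathfrak S_{cc}$ be the set of $\mathbf a\in\mathfrak S$ with $\sum\mathbf a$ conditionally convergent. $\mathfrak{ss}_{cc}$ is the least cardinality of a family $\mathcal X\subseteq[\omega]^\omega_\omega$ such that for every $\mathbf a\in\mathfrak S_{cc}$ there is $X\in\mathcal X$ with $\sum_X\mathbf a$ conditionally convergent; $\mathfrak{ss}_{cc}^\perp$ is the least cardinality of a family $\mathcal A\subseteq\mathfrak S_{cc}$ such that no $X\in[\omega]^\omega_\omega$ makes $\sum_X\mathbf a$ conditionally convergent for all $\mathbf a\in\mathcal A$. $\mathfrak b$ and $\mathfrak d$ are the bounding and dominating numbers. *)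

(* Defs.v *)
From HB Require Import structures.
From mathcomp Require Import all_boot all_order all_algebra.
From mathcomp Require Import all_classical all_reals all_analysis.
From mathcomp Require Import Rstruct Rstruct_topology.
Set Implicit Arguments. Unset Strict Implicit. Unset Printing Implicit Defensive.
Import Order.TTheory GRing.Theory Num.Theory.
Local Open Scope classical_set_scope.
Local Open Scope ring_scope.

Definition toR (a : nat -> rat) : nat -> Rdefinitions.R := fun n => ratr (a n).

Definition series_convergent (b : nat -> rat) : Prop :=
  cvgn (series (toR b)).

Definition series_conditional (b : nat -> rat) : Prop :=
  ((fun N : nat => \sum_(i < N | (0 < b i)%R) (toR b i)) @ \oo --> +oo)%classic
  /\ ((fun N : nat => \sum_(i < N | (b i < 0)%R) (toR b i)) @ \oo --> -oo)%classic.

Definition cond_convergent (b : nat -> rat) : Prop :=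
  series_convergent b /\ series_conditional b.

Definition in_S (a : nat -> rat) : Prop := (toR a @ \oo --> (0 : Rdefinitions.R))%classic.

Definition in_Scc (a : nat -> rat) : Prop := in_S a /\ cond_convergent a.

Definition inf_coinf (X : set nat) : Prop := infinite_set X /\ infinite_set (~` X).

(* sum_X a is conditionally convergent, where sum_X a = sum_n a_(i_n) for the
   increasing enumeration <i_n> of X. *)
Definition sub_cc (X : set nat) (a : nat -> rat) : Prop :=
  exists i : nat -> nat, (forall n m, (n < m)%N -> (i n < i m)%N) /\
    range i = X /\ cond_convergent (fun n => a (i n)).

Definition eventually_le (g f : nat -> nat) : Prop :=
  exists n0, forall n, (n0 <= n)%N -> (g n <= f n)%N.

Definition dominating (D : set (nat -> nat)) : Prop :=
  forall g, exists2 f, D f & eventually_le g f.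

Definition unbounded (B : set (nat -> nat)) : Prop :=
  forall g, exists2 f, B f & ~ eventually_le f g.

(* Main.v *)
Require Import Defs.
From mathcomp Require Import all_boot all_order all_algebra.
From mathcomp Require Import all_classical all_reals all_analysis.
From mathcomp Require Import Rstruct Rstruct_topology lra zify.
Import Order.TTheory GRing.Theory Num.Theory numFieldNormedType.Exports.
Local Open Scope classical_set_scope.
Section Constr.
Local Open Scope ring_scope.
Variable f : nat -> nat.

Fixpoint st (m : nat) : nat * nat :=
  match m with
  | 0 => (0%N, 0%N)
  | m'.+1 => let: (i, c) := st m' in
      if (f c.+1 <= i.+1)%N then (i.+2, c.+1) else (i.+1, c)
  end.
Definition ii m := (st m).1.
Definition cc m := (st m).2.
Definition sk m : bool := (f (cc m).+1 <= (ii m).+1)%N.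

Lemma ii_S m : ii m.+1 = (ii m + 1 + sk m)%N.
Proof. rewrite /sk /ii /cc /=; case: (st m) => i c /=; case: ifP => h /=; rewrite ?h /=; lia. Qed.
Lemma cc_S m : cc m.+1 = (cc m + sk m)%N.
Proof. rewrite /sk /ii /cc /=; case: (st m) => i c /=; case: ifP => h /=; rewrite ?h /=; lia. Qed.
Lemma ii0 : ii 0 = 0%N. Proof. by []. Qed.
Lemma cc0 : cc 0 = 0%N. Proof. by []. Qed.

Lemma ii_mono n k : (ii n + k <= ii (n + k))%N.
Proof. elim: k => [|k IH]; first by rewrite !addn0. rewrite !addnS ii_S; lia. Qed.
Lemma ii_lt n m : (n < m)%N -> (ii n < ii m)%N.
Proof. move=> nm; have := ii_mono n (m - n); have -> : (n + (m - n) = m)%N by lia. lia. Qed.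
Lemma ii_le n m : (n <= m)%N -> (ii n <= ii m)%N.
Proof. move=> nm; have := ii_mono n (m - n); have -> : (n + (m - n) = m)%N by lia. lia. Qed.
Lemma ii_ge m : (m <= ii m)%N.
Proof. have := ii_mono 0 m; rewrite ii0 !add0n; lia. Qed.
Lemma cc_mono n k : (cc n <= cc (n + k))%N.
Proof. elim: k => [|k IH]; first by rewrite !addn0. rewrite !addnS cc_S; lia. Qed.
Lemma cc_le n m : (n <= m)%N -> (cc n <= cc m)%N.
Proof. move=> nm; have := cc_mono n (m - n); have -> : (n + (m - n) = m)%N by lia. lia. Qed.

Lemma sk_inf N : exists m, (N <= m)%N /\ sk m.
Proof.
apply: contrapT => H.
have H' : forall m, (N <= m)%N -> sk m = false.
  move=> m Nm; apply/negP => s; apply: H; by exists m.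
have Hc : forall k, cc (N + k) = cc N.
  elim=> [|k IH]; first by rewrite addn0.
  by rewrite addnS cc_S IH H' ?addn0 //; lia.
have := H' (N + f (cc N).+1)%N (leq_addr _ _).
rewrite /sk Hc.
have := ii_ge (N + f (cc N).+1).
move=> h1; have -> // : (f (cc N).+1 <= (ii (N + f (cc N).+1)).+1)%N by lia.
Qed.

Lemma cc_unbounded k : exists M, (k <= cc M)%N.
Proof.
elim: k => [|k [M HM]]; first by exists 0%N.
have [m [Mm s]] := sk_inf M.
exists m.+1; rewrite cc_S s; have := @cc_le M m Mm; lia.
Qed.

Lemma decomp (w : nat -> Rdefinitions.R) M :
  \sum_(0 <= j < ii M) w j = \sum_(0 <= m < M) w (ii m) +
     \sum_(0 <= m < M) (if sk m then w (ii m).+1 else 0).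
Proof.
elim: M => [|M IH]; first by rewrite ii0 !big_geq // addr0.
rewrite !big_nat_recr //= ii_S.
case: (sk M) => /=.
  have -> : (ii M + 1 + 1 = (ii M).+2)%N by lia.
  rewrite !big_nat_recr //= IH; lra.
have -> : (ii M + 1 + 0 = (ii M).+1)%N by lia.
rewrite !big_nat_recr //= IH; lra.
Qed.

End Constr.

Section Core.
Local Open Scope ring_scope.
Local Notation R := Rdefinitions.R.

Definition FF (f : nat -> nat) : set nat := range (ii f).

Lemma unbounded_infinite (A : set nat) :
  (forall N, exists n, (N <= n)%N /\ A n) -> infinite_set A.
Proof.
move=> HA /finite_fsetP [X AX].
have [n [Nn An]] := HA (\max_(x <- finmap.enum_fset X) x).+1.
have nX : n \in finmap.enum_fset X by move: An; rewrite AX.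
have := @leq_bigmax_seq _ (finmap.enum_fset X) xpredT id n nX isT.
by move=> h; have := leq_trans Nn h; rewrite ltnn.
Qed.

Lemma FF_inf f : inf_coinf (FF f).
Proof.
split.
- apply: unbounded_infinite => N; exists (ii f N); split; [exact: ii_ge | by exists N].
- apply: unbounded_infinite => N.
  have [m [Nm s]] := sk_inf f N.
  exists (ii f m).+1; split; first by have := ii_ge f m; lia.
  move=> [k _ Hk].
  case: (leqP k m) => km; first by have := @ii_le f _ _ km; lia.
  have := @ii_le f _ _ km; rewrite ii_S s /=; lia.
Qed.

Definition hh (a : nat -> rat) (n : nat) : nat :=
  match pselect (exists m : nat, forall j, (m <= j)%N -> `|toR a j| <= (2^-1 : R)^+n) with
  | left e => projT1 (cid e)
  | right _ => 0%N
  end.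

Lemma hhP a n : in_S a -> forall j, (hh a n <= j)%N -> `|toR a j| <= (2^-1 : R)^+n.
Proof.
move=> Sa; rewrite /hh; case: pselect => [e|ne]; first exact: (projT2 (cid e)).
exfalso; apply: ne.
have eps0 : 0 < (2^-1 : R)^+n by rewrite exprn_gt0 // invr_gt0.
have Sa' : (toR a @ \oo --> (0:R))%classic := Sa.
have [N _ HN] := @cvgr_dist_le _ (Rdefinitions.R : realType) _ _ _ (toR a) 0 Sa _ eps0.
exists N => j Nj; have := HN j Nj; by rewrite sub0r normrN.
Qed.


Lemma half_diff_le1 (n m : nat) : (2^-1 : R)^+n - (2^-1)^+m <= 1.
Proof.
have h1 : (2^-1 : R)^+n <= 1 by apply: exprn_ile1; lra.
have h2 : 0 <= (2^-1 : R)^+m by apply: exprn_ge0; lra.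
lra.
Qed.

Lemma core f a : in_Scc a -> eventually_le (hh a) f -> sub_cc (FF f) a.
Proof.
move=> [Sa [Ca [Cpos Cneg]]] [n0 Hn0].
exists (ii f); split; first by move=> n m; exact: ii_lt.
split => //.
pose u : nat -> R := toR a.
pose t m : R := if sk f m then u (ii f m).+1 else 0.
have tb : forall m, (n0 <= cc f m)%N ->
    `|t m| <= if sk f m then (2^-1 : R)^+(cc f m).+1 else 0.
  move=> m Hm; rewrite /t; case E: (sk f m); last by rewrite normr0.
  have h : (hh a (cc f m).+1 <= f (cc f m).+1)%N by apply: Hn0; lia.
  apply: hhP => //; apply: (leq_trans h).
  by move: E; rewrite /sk.
have tele : forall M0 k, \sum_(M0 <= m < M0 + k)
    (if sk f m then (2^-1 : R)^+(cc f m).+1 else 0) =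
    (2^-1)^+(cc f M0) - (2^-1)^+(cc f (M0 + k)).
  move=> M0; elim=> [|k IH]; first by rewrite addn0 big_geq // subrr.
  rewrite addnS big_nat_recr ?leq_addr //= IH cc_S.
  case: (sk f (M0 + k)) => /=; last by rewrite addn0; lra.
  rewrite addn1 !exprS; lra.
have [M0 HM0] := cc_unbounded f n0.
pose K := \sum_(0 <= m < M0) `|t m|.
have Bnd : forall N, \sum_(0 <= m < N) `|t m| <= K + 1.
  move=> N.
  apply: (@le_trans _ _ (\sum_(0 <= m < M0 + N) `|t m|)).
    by apply: (@nondecreasing_series _ (fun m => `|t m|) xpredT 0%N) => //; lia.
  rewrite (@big_cat_nat _ _ _ M0) ?leq_addr //= lerD2l.
  apply: le_trans (_ : \sum_(M0 <= m < M0 + N)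
     (if sk f m then (2^-1 : R)^+(cc f m).+1 else 0) <= 1).
    apply: ler_sum_nat => m /andP[Hm _]; apply: tb.
    exact: leq_trans HM0 (@cc_le f _ _ Hm).
  rewrite tele.
  exact: half_diff_le1.
have Rb : forall (w : nat -> R), (forall j, `|w j| <= `|u j|) -> forall N,
   `|\sum_(0 <= m < N) (if sk f m then w (ii f m).+1 else 0)| <= K + 1.
  move=> w hw N; apply: le_trans (ler_norm_sum _ _ _) _.
  apply: le_trans (Bnd N); apply: ler_sum => m _; rewrite /t.
  by case: (sk f m) => //=; rewrite normr0.
have iioo : (ii f @ \oo --> \oo)%classic.
  move=> P [N _ HN]; exists N => // n /= Nn; apply: HN.
  by have := ii_ge f n; rewrite /=; lia.
split.
  have E : series (toR (fun n => a (ii f n))) = (series u \o ii f) - series t.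
    apply/funext => N; rewrite -[RHS]/(series u (ii f N) - series t N) /series /= decomp addrK //.
  rewrite /series_convergent E; apply: (@is_cvgB _ (Rdefinitions.R : realType)).
    apply: (cvgP (limn (series u))); apply: cvg_comp iioo Ca.
  apply: normed_cvg; apply: nondecreasing_is_cvgn.
    move=> m n mn; exact: (@nondecreasing_series _ (fun m => `|t m|) xpredT 0%N).
  by exists (K + 1) => _ [n _ <-]; exact: Bnd n.
split.
- apply/cvgryPge => A.
  move/cvgryPge : Cpos => /(_ (A + (K + 1))) [N _ HN].
  exists N => // n /= Nn.
  have := HN (ii f n) (leq_trans Nn (ii_ge f n)).
  have e1 : \sum_(i < ii f n | (0 < a i)%R) toR a i = \sum_(0 <= j < ii f n) (if (0 < a j)%R then toR a j else 0).
    by rewrite big_mkcond big_mkord.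
  have e2 : \sum_(i < n | (0 < a (ii f i))%R) toR (fun n => a (ii f n)) i = \sum_(0 <= j < n) (if (0 < a (ii f j))%R then toR a (ii f j) else 0).
    by rewrite big_mkcond big_mkord.
  rewrite e1 e2 (decomp f (fun j => if (0 < a j)%R then toR a j else 0) n) => h.
  have hw : forall j, `|(fun j => if (0 < a j)%R then toR a j else 0) j| <= `|u j|.
    by move=> j /=; case: ifP => _ //; rewrite normr0.
  have := Rb _ hw n.
  rewrite ler_norml => /andP[h1 h2].
  move: h h1 h2; rewrite /toR /=; lra.
- apply/cvgrNyPle => A.
  move/cvgrNyPle : Cneg => /(_ (A - (K + 1))) [N _ HN].
  exists N => // n /= Nn.
  have := HN (ii f n) (leq_trans Nn (ii_ge f n)).
  have e1 : \sum_(i < ii f n | (a i < 0)%R) toR a i = \sum_(0 <= j < ii f n) (if (a j < 0)%R then toR a j else 0).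
    by rewrite big_mkcond big_mkord.
  have e2 : \sum_(i < n | (a (ii f i) < 0)%R) toR (fun n => a (ii f n)) i = \sum_(0 <= j < n) (if (a (ii f j) < 0)%R then toR a (ii f j) else 0).
    by rewrite big_mkcond big_mkord.
  rewrite e1 e2 (decomp f (fun j => if (a j < 0)%R then toR a j else 0) n) => h.
  have hw : forall j, `|(fun j => if (a j < 0)%R then toR a j else 0) j| <= `|u j|.
    by move=> j /=; case: ifP => _ //; rewrite normr0.
  have := Rb _ hw n.
  rewrite ler_norml => /andP[h1 h2].
  move: h h1 h2; rewrite /toR /=; lra.
Qed.
End Core.

Theorem mainTheorem5 :
  (forall D : set (nat -> nat), dominating D ->
     exists F : (nat -> nat) -> set nat,
       (forall f, D f -> inf_coinf (F f)) /\
       (forall a, in_Scc a -> exists2 f, D f & sub_cc (F f) a))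
  /\
  (forall A : set (nat -> rat), A `<=` in_Scc ->
     (forall X : set nat, inf_coinf X -> exists2 a, A a & ~ sub_cc X a) ->
     exists G : (nat -> rat) -> (nat -> nat), unbounded (G @` A)).
Proof.
split.
- move=> D HD; exists FF; split; first by move=> f _; exact: FF_inf.
  move=> a Sa; have [f Df Hf] := HD (hh a).
  by exists f => //; exact: core.
- move=> A AS HA; exists hh => g.
  apply: contrapT => H.
  have H' : forall a, A a -> eventually_le (hh a) g.
    move=> a Aa; apply: contrapT => ne; apply: H.
    by exists (hh a) => //; exists a.
  have [a Aa nsub] := HA (FF g) (FF_inf g).
  by apply: nsub; apply: core; [exact: AS | exact: H'].
Qed.
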